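(* Let $l,u,\hbar$ satisfy the standing assumptions below, let $\overline{Y}\in C^1_G(0,T)$ with $l_T\le\hat{\mathbb{E}}[\hbar(T,\overline{Y}_T)]\le u_T$, and let $(Y,R)\in C^1_G(0,T)\times C^T_B$ be the solution of the backward Skorokhod problem with sublinear expectation associated to $\overline{Y},\hbar$ and barriers $l,u$. Then for every $t\in[0,T]$, $$|R_T-R_t|\le\mathscr{C}\sup_{s\in[t,T]}\hat{\mathbb{E}}[|\overline{Y}_s|]+C_0(t,T),$$ where $\mathscr{C}:=1+\frac{2\overline{c}}{\underline{c}}$ and $C_0(t,T):=\sup_{s\in[t,T]}\max[|L_s(0)|,|U_s(0)|]$.
   Context: Setting: $\hat{\mathbb{E}}$ is the $G$-expectation on $\Omega_T=\{\omega\in C([0,T];\mathbb{R}^d):\omega_0=0\}$; $L^1_G(\Omega_t)$ the completion of bounded Lipschitz cylinder functionals of the canonical process up to $t$ under $\hat{\mathbb{E}}|\cdot|$; $C^1_G(0,T)$ the processes $Y$ with $Y_v\in L^1_G(\Omega_v)$ and $v\mapsto Y_v$ continuous in $\hat{\mathbb{E}}|\cdot|$; $C^T_B$ the deterministic continuous functions on $[0,T]$ of bounded variation starting at $0$. Standing assumptions: $l,u$ bounded continuous with $\inf_t(u_t-l_t)>0$; $\hbar:[0,T]\times\Omega_T\times\mathbb{R}\to\mathbb{R}$ with $(t,y)\mapsto\hbar(t,y)$ uniformly continuous uniformly in $\omega$, strictly increasing in $y$, $\hbar(t,y)\in L^1_G(\Omega_T)$, $\hat{\mathbb{E}}[\lim_{y\downarrow-\infty}\hbar(t,y)]<\inf_sl_s<\sup_su_s<\hat{\mathbb{E}}[\lim_{y\uparrow\infty}\hbar(t,y)]$,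 $|\hbar(t,y)|\le C_\hbar(1+|y|)$, $\underline{c}|y-y'|\le|\hbar(t,y)-\hbar(t,y')|\le\overline{c}|y-y'|$ ($0<\underline{c}\le\overline{c}$). For $X\in L^1_G(\Omega_s)$: $\overline{H}(s,x,X)=\hat{\mathbb{E}}[\hbar(s,x+X-\hat{\mathbb{E}}[X])]$, $L_s(X)=\overline{H}^{-1}(s,\cdot,X)(l_s)$, $U_s(X)=\overline{H}^{-1}(s,\cdot,X)(u_s)$. $(Y,R)$ solves the backward Skorokhod problem with sublinear expectation associated to $\overline{Y},\hbar,l,u$ if $Y_t=\overline{Y}_t+R_T-R_t$, $l_t\le\hat{\mathbb{E}}[\hbar(t,Y_t)]\le u_t$ for all $t$, and $\int_s^t(\hat{\mathbb{E}}[\hbar(v,Y_v)]-l_v)dR_v\le0$, $\int_s^t(\hat{\mathbb{E}}[\hbar(v,Y_v)]-u_v)dR_v\le0$ for $0\le s\le t\le T$. *)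

(* Defs.v *)
From Stdlib Require Import Reals ClassicalEpsilon.
From Coquelicot Require Import Coquelicot.
Open Scope R_scope.

Fixpoint rsum (f : nat -> R) (n : nat) : R :=
  match n with O => 0 | S k => rsum f k + f k end.

Definition tagged_partition (a b : R) (n : nat) (x xi : nat -> R) : Prop :=
  x O = a /\ x n = b /\
  (forall i, (i < n)%nat -> x i < x (S i) /\ x i <= xi i <= x (S i)).

Definition is_RS_integral (f g : R -> R) (a b I : R) : Prop :=
  forall eps, 0 < eps -> exists delta, 0 < delta /\
    forall n x xi, tagged_partition a b n x xi ->
      (forall i, (i < n)%nat -> x (S i) - x i < delta) ->
      Rabs (rsum (fun i => f (xi i) * (g (x (S i)) - g (x i))) n - I) < eps.

(* H : the space of random variables (plays the role of L^1_G(Omega_T)),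
   E : the sublinear expectation on it (plays the role of the G-expectation). *)
Definition sublinear_expectation {Omega : Type}
  (H : (Omega -> R) -> Prop) (E : (Omega -> R) -> R) : Prop :=
  (forall c : R, H (fun _ => c)) /\
  (forall X Y, H X -> H Y -> H (fun w => X w + Y w)) /\
  (forall (a : R) X, H X -> H (fun w => a * X w)) /\
  (forall X, H X -> H (fun w => Rabs (X w))) /\
  (forall X Y, H X -> H Y -> (forall w, X w <= Y w) -> E X <= E Y) /\
  (forall c : R, E (fun _ => c) = c) /\
  (forall X Y, H X -> H Y -> E (fun w => X w + Y w) <= E X + E Y) /\
  (forall (a : R) X, 0 <= a -> H X -> E (fun w => a * X w) = a * E X).

Definition C1G {Omega : Type} (H : (Omega -> R) -> Prop) (E : (Omega -> R) -> R)
  (T : R) (Y : R -> Omega -> R) : Prop :=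
  (forall v, 0 <= v <= T -> H (Y v)) /\
  (forall v, 0 <= v <= T -> forall eps, 0 < eps -> exists delta, 0 < delta /\
     forall w, 0 <= w <= T -> Rabs (w - v) < delta ->
       E (fun om => Rabs (Y w om - Y v om)) < eps).

Definition bounded_variation (T : R) (R0 : R -> R) : Prop :=
  exists M, forall n (x : nat -> R),
    x O = 0 -> x n = T -> (forall i, (i < n)%nat -> x i < x (S i)) ->
    rsum (fun i => Rabs (R0 (x (S i)) - R0 (x i))) n <= M.

Definition CTB (T : R) (R0 : R -> R) : Prop :=
  R0 0 = 0 /\
  (forall t, 0 <= t <= T -> continuity_pt R0 t) /\
  bounded_variation T R0.

Definition hbar_assumptions {Omega : Type} (H : (Omega -> R) -> Prop)
  (T : R) (hbar : R -> Omega -> R -> R) (Ch cl cu : R) : Prop :=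
  (forall eps, 0 < eps -> exists delta, 0 < delta /\
     forall w t t' y y', 0 <= t <= T -> 0 <= t' <= T ->
       Rabs (t - t') < delta -> Rabs (y - y') < delta ->
       Rabs (hbar t w y - hbar t' w y') < eps) /\
  (forall t w y y', y < y' -> hbar t w y < hbar t w y') /\
  (forall t y, 0 <= t <= T -> H (fun w => hbar t w y)) /\
  (* hbar(t,X) in L^1_G for X in L^1_G (automatic for L^1_G by Lipschitz) *)
  (forall t X, 0 <= t <= T -> H X -> H (fun w => hbar t w (X w))) /\
  (forall t w y, Rabs (hbar t w y) <= Ch * (1 + Rabs y)) /\
  0 < cl /\ cl <= cu /\
  (forall t w y y', cl * Rabs (y - y') <= Rabs (hbar t w y - hbar t w y') /\
                    Rabs (hbar t w y - hbar t w y') <= cu * Rabs (y - y')).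

Definition barrier_assumptions (T : R) (l u : R -> R) : Prop :=
  (exists M, forall t, 0 <= t <= T -> Rabs (l t) <= M /\ Rabs (u t) <= M) /\
  (forall t, 0 <= t <= T -> continuity_pt l t /\ continuity_pt u t) /\
  (exists d, 0 < d /\ forall t, 0 <= t <= T -> d <= u t - l t).

Definition Hbar {Omega : Type} (E : (Omega -> R) -> R)
  (hbar : R -> Omega -> R -> R) (s x : R) (X : Omega -> R) : R :=
  E (fun w => hbar s w (x + X w - E X)).

(* f^{-1}(c): some x with f x = c (the unique one when f is a bijection) *)
Definition inv_at (f : R -> R) (c : R) : R :=
  epsilon (inhabits 0) (fun x => f x = c).

Definition Lop {Omega : Type} (E : (Omega -> R) -> R)
  (hbar : R -> Omega -> R -> R) (l : R -> R) (s : R) (X : Omega -> R) : R :=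
  inv_at (fun x => Hbar E hbar s x X) (l s).

Definition Uop {Omega : Type} (E : (Omega -> R) -> R)
  (hbar : R -> Omega -> R -> R) (u : R -> R) (s : R) (X : Omega -> R) : R :=
  inv_at (fun x => Hbar E hbar s x X) (u s).

Definition BSP {Omega : Type} (E : (Omega -> R) -> R)
  (hbar : R -> Omega -> R -> R) (l u : R -> R) (T : R)
  (Ybar Y : R -> Omega -> R) (R0 : R -> R) : Prop :=
  (* Y_t = Ybar_t + R_T - R_t  (equality in L^1_G, i.e. E|.| = 0) *)
  (forall t, 0 <= t <= T ->
     E (fun w => Rabs (Y t w - (Ybar t w + R0 T - R0 t))) = 0) /\
  (forall t, 0 <= t <= T ->
     l t <= E (fun w => hbar t w (Y t w)) <= u t) /\
  (forall s t, 0 <= s -> s <= t -> t <= T ->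
     exists I, is_RS_integral (fun v => E (fun w => hbar v w (Y v w)) - l v)
                               R0 s t I /\ I <= 0) /\
  (forall s t, 0 <= s -> s <= t -> t <= T ->
     exists I, is_RS_integral (fun v => E (fun w => hbar v w (Y v w)) - u v)
                               R0 s t I /\ I <= 0).

Definition supRbar (t T : R) (f : R -> R) : Rbar :=
  Lub_Rbar (fun x => exists s, t <= s <= T /\ x = f s).

(* Main.v *)
Require Import Defs.
From Stdlib Require Import Reals ClassicalEpsilon FunctionalExtensionality Lra.
From Coquelicot Require Import Coquelicot.
Open Scope R_scope.

Section Aux.
Variable Omega : Type.
Variable H : (Omega -> R) -> Prop.
Variable E : (Omega -> R) -> R.
Hypothesis SE : sublinear_expectation H E.

Lemma Hconst c : H (fun _ => c).
Proof. destruct SE as [h _]; apply h. Qed.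
Lemma Hadd A B : H A -> H B -> H (fun w => A w + B w).
Proof. destruct SE as [_ [h _]]; apply h. Qed.
Lemma Hscal a A : H A -> H (fun w => a * A w).
Proof. destruct SE as [_ [_ [h _]]]; apply h. Qed.
Lemma Habs A : H A -> H (fun w => Rabs (A w)).
Proof. destruct SE as [_ [_ [_ [h _]]]]; apply h. Qed.
Lemma Emono A B : H A -> H B -> (forall w, A w <= B w) -> E A <= E B.
Proof. destruct SE as [_ [_ [_ [_ [h _]]]]]; apply h. Qed.
Lemma Econst c : E (fun _ => c) = c.
Proof. destruct SE as [_ [_ [_ [_ [_ [h _]]]]]]; apply h. Qed.
Lemma Esub A B : H A -> H B -> E (fun w => A w + B w) <= E A + E B.
Proof. destruct SE as [_ [_ [_ [_ [_ [_ [h _]]]]]]]; apply h. Qed.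
Lemma Ehom a A : 0 <= a -> H A -> E (fun w => a * A w) = a * E A.
Proof. destruct SE as [_ [_ [_ [_ [_ [_ [_ h]]]]]]]; apply h. Qed.

Lemma Hminus A B : H A -> H B -> H (fun w => A w - B w).
Proof.
  intros HA HB.
  replace (fun w => A w - B w) with (fun w => A w + (-1) * B w).
  - apply Hadd; [exact HA| apply Hscal; exact HB].
  - apply functional_extensionality; intro; ring.
Qed.

Lemma Etransl A c : H A -> E (fun w => A w + c) = E A + c.
Proof.
  intros HA. apply Rle_antisym.
  - eapply Rle_trans. apply Esub; [exact HA| apply Hconst].
    rewrite Econst; lra.
  - assert (H1 : H (fun w => A w + c)) by (apply Hadd; [exact HA|apply Hconst]).
    assert (E A <= E (fun w => (A w + c) + (- c))).
    { apply Emono; [exact HA| apply Hadd; [exact H1|apply Hconst] | intro; lra]. }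
    assert (E (fun w => (A w + c) + (- c)) <= E (fun w => A w + c) + E (fun _ => -c)).
    { apply (Esub (fun w => A w + c) (fun _ => - c)); [exact H1| apply Hconst]. }
    rewrite Econst in H2. lra.
Qed.

Lemma Eplusabs A B : H A -> H B -> E A <= E B + E (fun w => Rabs (A w - B w)).
Proof.
  intros HA HB.
  eapply Rle_trans; [| apply (Esub B (fun w => Rabs (A w - B w))); auto using Habs, Hminus].
  apply Emono; auto. apply Hadd; auto using Habs, Hminus.
  intro w. pose proof (Rle_abs (A w - B w)). lra.
Qed.

Lemma Ebound A c Z : H A -> H Z -> 0 <= c -> (forall w, A w <= c * Z w) -> E A <= c * E Z.
Proof.
  intros HA HZ Hc Hp. rewrite <- Ehom by auto. apply Emono; auto using Hscal.
Qed.

Lemma Eabs_nonneg A : H A -> 0 <= E (fun w => Rabs (A w)).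
Proof.
  intros HA. rewrite <- (Econst 0). apply Emono; auto using Habs, Hconst.
  intro; apply Rabs_pos.
Qed.
End Aux.

Lemma surj_lemma (g : R -> R) cl cu : 0 < cl ->
  (forall x x', x < x' -> cl * (x' - x) <= g x' - g x) ->
  (forall x x', Rabs (g x - g x') <= cu * Rabs (x - x')) ->
  forall c, exists x, g x = c.
Proof.
  intros Hcl Hsl Hlip c.
  set (phi := fun x => g x - c).
  assert (Hc : continuity phi).
  { intros x. unfold phi. apply continuity_pt_minus; [|apply continuity_pt_const; intros ? ?; auto].
    intros eps Heps. destruct (Rle_lt_dec cu 0) as [Hu|Hu].
    - exists 1. split; [lra|]. intros y [_ Hy]. simpl in *. unfold R_dist.
      eapply Rle_lt_trans; [apply Hlip|]. pose proof (Rabs_pos (y - x)). nra.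
    - exists (eps / cu). split. apply Rdiv_lt_0_compat; auto.
      intros y [_ Hy]. simpl in *. unfold R_dist in *.
      eapply Rle_lt_trans; [apply Hlip|].
      apply (Rmult_lt_compat_l cu) in Hy; auto.
      replace (cu * (eps / cu)) with eps in Hy by (field; lra). exact Hy. }
  set (a := - Rabs (phi 0) / cl - 1). set (b := Rabs (phi 0) / cl + 1).
  assert (Ha : a < 0). { unfold a. pose proof (Rabs_pos (phi 0)).
    assert (0 <= Rabs (phi 0) / cl) by (apply Rdiv_le_0_compat; lra). lra. }
  assert (Hb : 0 < b). { unfold b. pose proof (Rabs_pos (phi 0)).
    assert (0 <= Rabs (phi 0) / cl) by (apply Rdiv_le_0_compat; lra). lra. }
  assert (Pa : phi a <= 0).
  { pose proof (Hsl a 0 Ha). unfold phi in *.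
    assert (cl * (0 - a) = Rabs (g 0 - c) + cl) by (unfold a, phi; field; lra).
    pose proof (Rle_abs (g 0 - c)). lra. }
  assert (Pb : 0 <= phi b).
  { pose proof (Hsl 0 b Hb). unfold phi in *.
    assert (cl * (b - 0) = Rabs (g 0 - c) + cl) by (unfold b, phi; field; lra).
    pose proof (Rle_abs (- (g 0 - c))). rewrite Rabs_Ropp in H1. lra. }
  destruct (IVT_cor phi a b Hc) as [z [_ Hz]]; [lra| nra |].
  exists z. unfold phi in Hz. lra.
Qed.

Lemma inv_at_spec g c : (exists x, g x = c) -> g (inv_at g c) = c.
Proof. intros Hex. unfold inv_at. apply epsilon_spec; exact Hex. Qed.

Lemma core (Omega : Type) (H : (Omega -> R) -> Prop) (E : (Omega -> R) -> R)
  (T : R) (l u : R -> R) (hbar : R -> Omega -> R -> R) (Ch cl cu : R)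
  (SE : sublinear_expectation H E) (HA : hbar_assumptions H T hbar Ch cl cu)
  t (Ht : 0 <= t <= T) (X Yt : Omega -> R) (K : R) :
  H X -> H Yt -> E (fun w => Rabs (Yt w - (X w + K))) = 0 ->
  l t <= E (fun w => hbar t w (Yt w)) <= u t ->
  Rabs K <= cu / cl * E (fun w => Rabs (X w)) +
     Rmax (Rabs (Lop E hbar l t (fun _ => 0))) (Rabs (Uop E hbar u t (fun _ => 0))).
Proof.
  intros HX HY HYK [Hl Hu].
  destruct HA as [_ [Hinc [Hmem [HmemX [_ [Hcl [Hclu Hlip]]]]]]].
  assert (Hcu : 0 <= cu) by lra.
  set (g := fun x => E (fun w => hbar t w x)).
  set (f := E (fun w => hbar t w (X w + K))).
  assert (HXK : H (fun w => X w + K)) by (apply (Hadd _ _ E SE); auto; apply (Hconst _ _ E SE); auto).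
  assert (HhXK : H (fun w => hbar t w (X w + K))) by (apply (HmemX t (fun w => X w + K)); auto).
  assert (HhY : H (fun w => hbar t w (Yt w))) by (apply HmemX; auto).
  assert (HabsYK : H (fun w => Rabs (Yt w - (X w + K)))).
  { apply (Habs _ _ E SE); auto. apply (Hminus _ _ E SE); auto. }
  assert (Hd1 : E (fun w => Rabs (hbar t w (Yt w) - hbar t w (X w + K))) <= 0).
  { rewrite <- (Rmult_0_r cu), <- HYK.
    apply (Ebound _ _ E SE); auto. apply (Habs _ _ E SE); auto; apply (Hminus _ _ E SE); auto.
    intro w. eapply (proj2 (Hlip _ _ _ _)). }
  assert (Hd2 : E (fun w => Rabs (hbar t w (X w + K) - hbar t w (Yt w))) <= 0).
  { rewrite <- (Rmult_0_r cu), <- HYK.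
    apply (Ebound _ _ E SE); auto. apply (Habs _ _ E SE); auto; apply (Hminus _ _ E SE); auto.
    intro w. rewrite (Rabs_minus_sym (Yt w)). eapply (proj2 (Hlip _ _ _ _)). }
  assert (Hf1 : l t <= f).
  { pose proof (Eplusabs _ _ _ SE _ _ HhY HhXK). unfold f. lra. }
  assert (Hf2 : f <= u t).
  { pose proof (Eplusabs _ _ _ SE _ _ HhXK HhY). unfold f. lra. }
  set (a := E (fun w => Rabs (X w))).
  assert (Ha : 0 <= a) by (apply (Eabs_nonneg _ _ _ SE); auto).
  assert (HhK : forall x, H (fun w => hbar t w x)) by (intros; apply Hmem; auto).
  assert (Hg1 : f <= g K + cu * a).
  { eapply Rle_trans. apply (Eplusabs _ _ _ SE _ _ HhXK (HhK K)).
    apply Rplus_le_compat_l. apply (Ebound _ _ E SE); auto.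
    apply (Habs _ _ E SE); auto; apply (Hminus _ _ E SE); auto. apply (Habs _ _ E SE); auto.
    intro w. eapply Rle_trans. eapply (proj2 (Hlip _ _ _ _)). right. f_equal. f_equal. ring. }
  assert (Hg2 : g K <= f + cu * a).
  { eapply Rle_trans. apply (Eplusabs _ _ _ SE _ _ (HhK K) HhXK).
    apply Rplus_le_compat_l. apply (Ebound _ _ E SE); auto.
    apply (Habs _ _ E SE); auto; apply (Hminus _ _ E SE); auto. apply (Habs _ _ E SE); auto.
    intro w. eapply Rle_trans. eapply (proj2 (Hlip _ _ _ _)). right. f_equal.
    replace (K - (X w + K)) with (- X w) by ring. apply Rabs_Ropp. }
  assert (Hsl : forall x x', x < x' -> cl * (x' - x) <= g x' - g x).
  { intros x x' Hxx. unfold g.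
    assert (E (fun w => hbar t w x + cl * (x' - x)) <= E (fun w => hbar t w x')).
    { apply (Emono _ _ E SE); auto. apply (Hadd _ _ E SE); auto; apply (Hconst _ _ E SE); auto.
      intro w. destruct (Hlip t w x x') as [H1 _]. pose proof (Hinc t w x x' Hxx).
      rewrite Rabs_left in H1 by lra. rewrite Rabs_left in H1 by lra. lra. }
    rewrite (Etransl _ _ _ SE) in H0 by auto. lra. }
  assert (Hlg : forall x x', Rabs (g x - g x') <= cu * Rabs (x - x')).
  { assert (forall x x', g x <= g x' + cu * Rabs (x - x')).
    { intros x x'. eapply Rle_trans. apply (Eplusabs _ _ _ SE _ _ (HhK x) (HhK x')).
      apply Rplus_le_compat_l. rewrite <- (Econst _ _ _ SE (cu * Rabs (x - x'))).
      apply (Emono _ _ E SE); auto. apply (Habs _ _ E SE); auto; apply (Hminus _ _ E SE); auto. apply (Hconst _ _ E SE); auto.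
      intro w; eapply (proj2 (Hlip _ _ _ _)). }
    intros x x'. apply Rabs_le. pose proof (H0 x x'). pose proof (H0 x' x).
    rewrite Rabs_minus_sym in H2. lra. }
  assert (Hg0 : (fun x => Hbar E hbar t x (fun _ => 0)) = g).
  { apply functional_extensionality; intro x. unfold Hbar, g.
    rewrite (Econst _ _ _ SE). f_equal. apply functional_extensionality; intro w. f_equal. ring. }
  assert (HL : g (Lop E hbar l t (fun _ => 0)) = l t).
  { unfold Lop. rewrite Hg0. apply inv_at_spec. eapply surj_lemma; eauto. }
  assert (HU : g (Uop E hbar u t (fun _ => 0)) = u t).
  { unfold Uop. rewrite Hg0. apply inv_at_spec. eapply surj_lemma; eauto. }
  set (L := Lop E hbar l t (fun _ => 0)) in *.
  set (U := Uop E hbar u t (fun _ => 0)) in *.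
  assert (Hr : cu / cl * a * cl = cu * a) by (field; lra).
  assert (K1 : L - cu / cl * a <= K).
  { destruct (Rlt_or_le K L) as [Hlt|]; [|
      assert (0 <= cu / cl * a) by (apply Rmult_le_pos; auto; apply Rdiv_le_0_compat; lra); lra].
    pose proof (Hsl K L Hlt).
    assert (cl * (L - K) <= cu * a) by lra.
    assert (L - K <= cu / cl * a).
    { apply (Rmult_le_reg_r cl); lra. }
    lra. }
  assert (K2 : K <= U + cu / cl * a).
  { destruct (Rlt_or_le U K) as [Hlt|]; [|
      assert (0 <= cu / cl * a) by (apply Rmult_le_pos; auto; apply Rdiv_le_0_compat; lra); lra].
    pose proof (Hsl U K Hlt).
    assert (cl * (K - U) <= cu * a) by lra.
    assert (K - U <= cu / cl * a).
    { apply (Rmult_le_reg_r cl); lra. }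
    lra. }
  pose proof (Rle_abs L). pose proof (Rle_abs (-L)). rewrite Rabs_Ropp in *.
  pose proof (Rle_abs U). pose proof (Rle_abs (-U)). rewrite Rabs_Ropp in *.
  pose proof (Rmax_l (Rabs L) (Rabs U)). pose proof (Rmax_r (Rabs L) (Rabs U)).
  apply Rabs_le. lra.
Qed.

Lemma supRbar_ge t T (f : R -> R) s : t <= s <= T -> Rbar_le (f s) (supRbar t T f).
Proof.
  intros Hs. unfold supRbar. destruct (Lub_Rbar_correct (fun x => exists s, t <= s <= T /\ x = f s)) as [Hub _].
  apply Hub. exists s; auto.
Qed.

Theorem proposition3p11 (Omega : Type)
  (H : (Omega -> R) -> Prop) (E : (Omega -> R) -> R)
  (T : R) (l u : R -> R) (hbar : R -> Omega -> R -> R) (Ch cl cu : R)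
  (Ybar Y : R -> Omega -> R) (R0 : R -> R) :
  0 < T ->
  sublinear_expectation H E ->
  barrier_assumptions T l u ->
  hbar_assumptions H T hbar Ch cl cu ->
  C1G H E T Ybar ->
  l T <= E (fun w => hbar T w (Ybar T w)) <= u T ->
  C1G H E T Y -> CTB T R0 ->
  BSP E hbar l u T Ybar Y R0 ->
  forall t, 0 <= t <= T ->
    Rbar_le (Rabs (R0 T - R0 t))
      (Rbar_plus
         (Rbar_mult (1 + 2 * cu / cl)
            (supRbar t T (fun s => E (fun w => Rabs (Ybar s w)))))
         (supRbar t T (fun s => Rmax (Rabs (Lop E hbar l s (fun _ => 0)))
                                     (Rabs (Uop E hbar u s (fun _ => 0)))))).
Proof.
  intros HT SE _ HA [HYb _] _ [HYm _] _ [Heq [Hlu _]] t Ht.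
  pose proof HA as HA'.
  destruct HA' as [_ [_ [_ [_ [_ [Hcl [Hclu _]]]]]]].
  assert (HYK : E (fun w => Rabs (Y t w - (Ybar t w + (R0 T - R0 t)))) = 0).
  { rewrite <- (Heq t Ht). f_equal. apply functional_extensionality; intro w. f_equal. ring. }
  pose proof (core Omega H E T l u hbar Ch cl cu SE HA t Ht (Ybar t) (Y t) (R0 T - R0 t)
     (HYb t Ht) (HYm t Ht) HYK (Hlu t Ht)) as Hc.
  set (a := E (fun w => Rabs (Ybar t w))) in *.
  set (m := Rmax (Rabs (Lop E hbar l t (fun _ => 0))) (Rabs (Uop E hbar u t (fun _ => 0)))) in *.
  assert (Ha : 0 <= a) by (apply (Eabs_nonneg _ _ _ SE); auto).
  pose proof (supRbar_ge t T (fun s => E (fun w => Rabs (Ybar s w))) t ltac:(lra)) as S1.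
  pose proof (supRbar_ge t T (fun s => Rmax (Rabs (Lop E hbar l s (fun _ => 0)))
                                     (Rabs (Uop E hbar u s (fun _ => 0)))) t ltac:(lra)) as S2.
  simpl in S1, S2. fold a in S1. fold m in S2.
  assert (HC : 0 < 1 + 2 * cu / cl).
  { assert (0 <= cu / cl) by (apply Rdiv_le_0_compat; lra). unfold Rdiv in *. lra. }
  assert (Hb : cu / cl * a <= (1 + 2 * cu / cl) * a).
  { assert (0 <= cu / cl) by (apply Rdiv_le_0_compat; lra).
    replace (2 * cu / cl) with (2 * (cu / cl)) by (unfold Rdiv; ring). nra. }
  destruct (supRbar t T (fun s => E (fun w => Rabs (Ybar s w)))) as [s1| |] eqn:E1;
  destruct (supRbar t T (fun s => Rmax (Rabs (Lop E hbar l s (fun _ => 0)))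
                                     (Rabs (Uop E hbar u s (fun _ => 0))))) as [s2| |] eqn:E2;
  simpl in S1, S2; try contradiction.
  - simpl. assert ((1 + 2 * cu / cl) * a <= (1 + 2 * cu / cl) * s1) by nra. lra.
  - replace (Rbar_mult (1 + 2 * cu / cl) s1) with (Finite ((1 + 2 * cu / cl) * s1)) by reflexivity.
    simpl. auto.
  - rewrite Rbar_mult_comm.
    rewrite (is_Rbar_mult_unique _ _ _ (is_Rbar_mult_p_infty_pos (Finite (1 + 2 * cu / cl)) HC)).
    simpl; auto.
  - rewrite Rbar_mult_comm.
    rewrite (is_Rbar_mult_unique _ _ _ (is_Rbar_mult_p_infty_pos (Finite (1 + 2 * cu / cl)) HC)).
    simpl; auto.
Qed.
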